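(* Let $\Lambda=kS_{(r,s)}/I$ be a quadratic monomial algebra on an $(r,s)$-star quiver. If there are two distinct arrows $a,a'$ with $h(a)=h(a')=z$ and $\mathcal Z_a\subseteq\mathcal Z_{a'}$, or two distinct arrows $b,b'$ with $t(b)=t(b')=z$ and $\mathcal Z_b\subseteq\mathcal Z_{b'}$, then $\operatorname{Ext}^1_{\Lambda^e}(\Lambda,\Lambda^e)\neq0$.
   Context: The $(r,s)$-star quiver $S_{(r,s)}$: central vertex $z$, $r$ arrows $a_i:i\to z$ from distinct vertices and $s$ arrows $b_j:z\to j$ to distinct vertices, nothing else. Quadratic monomial: $I$ admissible generated by paths of length $2$ (necessarily of the form $b_ja_i$). For an arrow $a$ with $h(a)=z$, $\mathcal Z_a=\{b: z\to j \mid ba=0 \text{ in }\Lambda\}$; for $b$ with $t(b)=z$, $\mathcal Z_b=\{a: i\to z\mid ba=0\}$. $\Lambda^e=\Lambda\otimes_k\Lambda^{\mathrm{op}}$. *)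

(* Defs.v *)
From HB Require Import structures.
From mathcomp Require Import all_boot all_order all_algebra.
Set Implicit Arguments. Unset Strict Implicit. Unset Printing Implicit Defensive.
Import GRing.Theory.
Local Open Scope ring_scope.

(*   vertices : None = z, Some (inl i) = source i, Some (inr j) = sink j *)
(*   arrows   : a_i : i -> z   (i : 'I_r),   b_j : z -> j  (j : 'I_s)  *)
(*   paths    : trivial paths e_v, arrows a_i, b_j, and the length-2   *)
(*              paths b_j a_i (first a_i, then b_j).  There are no     *)
(*              longer paths.                                          *)

Definition vtx (r s : nat) := option ('I_r + 'I_s).
Definition qpath (r s : nat) := (vtx r s + (('I_r + 'I_s) + ('I_r * 'I_s)))%type.

Section Star.
Variables (r s : nat).

Definition vz : vtx r s := None.
Definition vsrc (i : 'I_r) : vtx r s := Some (inl i).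
Definition vsnk (j : 'I_s) : vtx r s := Some (inr j).

Definition pe (v : vtx r s) : qpath r s := inl v.
Definition pa (i : 'I_r) : qpath r s := inr (inl (inl i)).
Definition pb (j : 'I_s) : qpath r s := inr (inl (inr j)).
Definition pba (i : 'I_r) (j : 'I_s) : qpath r s := inr (inr (i, j)).

Definition ptail (p : qpath r s) : vtx r s :=
  match p with
  | inl v => v
  | inr (inl (inl i)) => vsrc i
  | inr (inl (inr _)) => vz
  | inr (inr (i, _)) => vsrc i
  end.
Definition phead (p : qpath r s) : vtx r s :=
  match p with
  | inl v => v
  | inr (inl (inl _)) => vz
  | inr (inl (inr j)) => vsnk j
  | inr (inr (_, j)) => vsnk j
  end.

(* product p * q in the path algebra kS_(r,s): "first q, then p";    *)
Definition pmul (p q : qpath r s) : option (qpath r s) :=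
  if ptail p != phead q then None else
  match p, q with
  | inl _, _ => Some q
  | _, inl _ => Some p
  | inr (inl (inr j)), inr (inl (inl i)) => Some (pba i j)
  | _, _ => None
  end.

(* The quadratic monomial ideal I generated by the paths b_j a_i,     *)
(* (i,j) \in Zr.  A path is a basis element of Lambda = kS/I iff it   *)
(* is not in I.                                                       *)
Definition nzpath (Zr : {set 'I_r * 'I_s}) (p : qpath r s) : bool :=
  match p with
  | inr (inr ij) => ij \notin Zr
  | _ => true
  end.

Definition LB (Zr : {set 'I_r * 'I_s}) := {p : qpath r s | nzpath Zr p}.

Variable Zr : {set 'I_r * 'I_s}.

(* product of basis elements in Lambda (None means the product is 0) *)
Definition lmul (p q : LB Zr) : option (LB Zr) :=
  obind (fun u => insub u) (pmul (val p) (val q)).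

Definition Le (v : vtx r s) : LB Zr := @exist _ _ (pe v) isT.
Definition La (i : 'I_r) : LB Zr := @exist _ _ (pa i) isT.
Definition Lb (j : 'I_s) : LB Zr := @exist _ _ (pb j) isT.

Definition Zset_a (i : 'I_r) : {set 'I_s} := [set j | lmul (Lb j) (La i) == None].
Definition Zset_b (j : 'I_s) : {set 'I_r} := [set i | lmul (Lb j) (La i) == None].

(* Lambda-bimodules (= left Lambda^e-modules, Lambda^e = Lambda (x)_k  *)
(* Lambda^op) on an F-vector space V.  The action of Lambda is given  *)
(* on the basis LB and extended linearly: L p v = p.v, R p v = v.p.   *)
Variable F : fieldType.

Definition act_of (V : lmodType F) (A : LB Zr -> V -> V) (o : option (LB Zr)) (v : V) : V :=
  if o is Some u then A u v else 0.

Record is_bimod (V : lmodType F) (L R : LB Zr -> V -> V) : Prop := IsBimod {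
  bimod_linL : forall p, linear (L p);
  bimod_linR : forall p, linear (R p);
  bimod_assocL : forall p q v, L p (L q v) = act_of L (lmul p q) v;
  bimod_assocR : forall p q v, R p (R q v) = act_of R (lmul q p) v;
  bimod_comm : forall p q v, R q (L p v) = L p (R q v);
  (* 1 = sum of the vertex idempotents acts as the identity *)
  bimod_unitL : forall v, \sum_(w : vtx r s) L (Le w) v = v;
  bimod_unitR : forall v, \sum_(w : vtx r s) R (Le w) v = v
}.

Definition is_bimod_hom (V W : lmodType F) (LV RV : LB Zr -> V -> V)
  (LW RW : LB Zr -> W -> W) (f : V -> W) : Prop :=
  [/\ linear f,
      forall p v, f (LV p v) = LW p (f v) &
      forall p v, f (RV p v) = RW p (f v)].

(* Lambda as a bimodule over itself: vectors are coordinate functions *)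
Definition Lam := {ffun LB Zr -> F^o}.
Definition LamL (p : LB Zr) (x : Lam) : Lam :=
  [ffun u => \sum_(q | lmul p q == Some u) x q].
Definition LamR (p : LB Zr) (x : Lam) : Lam :=
  [ffun u => \sum_(q | lmul q p == Some u) x q].

(* Lambda^e = Lambda (x)_k Lambda^op as a left Lambda^e-module, i.e. *)
(* as the bimodule with  p.(x (x) y).q = px (x) yq ; the basis       *)
(* element (q1, q2) stands for q1 (x) q2.                            *)
Definition Lame := {ffun (LB Zr * LB Zr) -> F^o}.
Definition LameL (p : LB Zr) (x : Lame) : Lame :=
  [ffun u => \sum_(q | lmul p q == Some u.1) x (q, u.2)].
Definition LameR (p : LB Zr) (x : Lame) : Lame :=
  [ffun u => \sum_(q | lmul q p == Some u.2) x (u.1, q)].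

(* Ext^1_{Lambda^e}(Lambda, Lambda^e) <> 0, in the Yoneda sense: there *)
(* is a non-split short exact sequence of Lambda^e-modules            *)
(*        0 -> Lambda^e -> E -> Lambda -> 0.                          *)
Definition Ext1_Lam_Lame_neq0 : Prop :=
  exists (E : lmodType F) (LE RE : LB Zr -> E -> E) (i : Lame -> E) (pi : E -> Lam),
    [/\ is_bimod LE RE,
        is_bimod_hom LameL LameR LE RE i,
        is_bimod_hom LE RE LamL LamR pi,
        (injective i /\ (forall y : Lam, exists e : E, pi e = y) /\
         (forall e : E, pi e = 0 <-> exists x : Lame, i x = e)) &
        ~ (exists sigma : Lam -> E,
              is_bimod_hom LamL LamR LE RE sigma /\ forall y, pi (sigma y) = y)].

End Star.

(* Main.v *)
Require Import Defs.
From mathcomp Require Import all_boot all_order all_algebra.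
Set Implicit Arguments. Unset Strict Implicit. Unset Printing Implicit Defensive.
Import GRing.Theory.
Local Open Scope ring_scope.

Section Q.
Variables (r s : nat) (Zr : {set 'I_r * 'I_s}).

Definition lmulq (x y : qpath r s) : option (qpath r s) :=
  obind (fun u => if nzpath Zr u then Some u else None) (pmul x y).

Ltac qdes x := case: x => [[[?|?]|]|[[?|?]|[? ?]]].

Ltac eqsplit := repeat (match goal with
  | |- context [(?a == ?b)] => let E := fresh "E" in case: (a =P b) => [E|E];
       [try (injection E; clear E; intros; subst); try subst | ] 
  | |- context [if ?c then _ else _] => let E := fresh "E" in case E: c; try congruence 
  end; rewrite //=).

Lemma lmulq_assoc (x y z : qpath r s) : nzpath Zr x -> nzpath Zr y -> nzpath Zr z ->
  obind (lmulq x) (lmulq y z) = obind (fun t => lmulq t z) (lmulq x y).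
Proof.
qdes x; qdes y; qdes z => //= *; rewrite /lmulq /pmul /=; eqsplit.

Qed.

Lemma nzpath_lmulq x y u : lmulq x y = Some u -> nzpath Zr u.
Proof. by rewrite /lmulq; case: pmul => //= v; case: ifP => // H [<-]. Qed.

Lemma lmul_val (p q : LB Zr) : omap val (lmul p q) = lmulq (val p) (val q).
Proof.
rewrite /lmul /lmulq; case: pmul => //= u.
case: insubP => [v Pu E | /negbTE ->] //=; by rewrite Pu E.
Qed.

Lemma omap_val_inj : injective (omap (fun p : LB Zr => val p)).
Proof. by move=> [a|] [b|] //= [/val_inj ->]. Qed.

Lemma obind_omap (A B C : Type) (f : B -> option C) (g : A -> B) o :
  obind f (omap g o) = obind (f \o g) o.
Proof. by case: o. Qed.

Lemma omap_obind (A B C : Type) (f : A -> option B) (g : B -> C) o :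
  omap g (obind f o) = obind (fun t => omap g (f t)) o.
Proof. by case: o. Qed.

Lemma lmul_assoc (p q w : LB Zr) :
  obind (lmul p) (lmul q w) = obind (fun t => lmul t w) (lmul p q).
Proof.
apply: omap_val_inj; rewrite !omap_obind.
have -> : obind (fun t => omap val (lmul p t)) (lmul q w) =
   obind (lmulq (val p)) (omap val (lmul q w)) by case: (lmul q w) => //= t; rewrite lmul_val.
have -> : obind (fun t => omap val (lmul t w)) (lmul p q) =
   obind (fun t => lmulq t (val w)) (omap val (lmul p q)) by case: (lmul p q) => //= t; rewrite lmul_val.
rewrite !lmul_val; apply: lmulq_assoc; exact: valP.
Qed.


Lemma lmulLe (p : LB Zr) w : lmul (Le Zr w) p = if phead (val p) == w then Some p else None.
Proof.
apply: omap_val_inj; rewrite lmul_val; case: p => x nx /=.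
rewrite (fun_if (omap _)) /=; move: nx; qdes x; case: w => [[?|?]|] => //= *;
  rewrite /lmulq /pmul /=; eqsplit.
Qed.

Lemma lmulRe (p : LB Zr) w : lmul p (Le Zr w) = if ptail (val p) == w then Some p else None.
Proof.
apply: omap_val_inj; rewrite lmul_val; case: p => x nx /=.
rewrite (fun_if (omap _)) /=; move: nx; qdes x; case: w => [[?|?]|] => //= *;
  rewrite /lmulq /pmul /=; eqsplit.
Qed.


Definition condq (thq : qpath r s -> option (qpath r s * qpath r s)) (x y : qpath r s) :=
  let A := obind (fun xy => omap (fun t => (t, xy.2)) (lmulq x xy.1)) (thq y) in
  let B := obind (fun xy => omap (fun t => (xy.1, t)) (lmulq xy.2 y)) (thq x) in
  let C := obind thq (lmulq x y) in
  (A = None /\ B = C) \/ (B = None /\ A = C).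

Section Case1.
Variables (i0 i1 : 'I_r).
Hypothesis Hne : i0 != i1.
Hypothesis Hsub : forall j, nzpath Zr (pba i1 j) -> nzpath Zr (pba i0 j).

Definition thq1 (x : qpath r s) : option (qpath r s * qpath r s) :=
  match x with
  | inr (inl (inl i)) => if i == i0 then Some (pa s i1, pe (vsrc s i0)) else None
  | inr (inr (i, j)) => if (i == i0) && ((i1, j) \notin Zr)
                        then Some (pba i1 j, pe (vsrc s i0)) else None
  | _ => None
  end.

Lemma thq1_nz x a b : thq1 x = Some (a, b) -> nzpath Zr a && nzpath Zr b.
Proof. qdes x => //=; eqsplit; case=> <- <- //=; rewrite andbT; assumption. Qed.

Lemma cond1 x y : nzpath Zr x -> nzpath Zr y -> condq thq1 x y.
Proof.
rewrite /condq; case: x => [[[ix|jx]|]|[[ix|jx]|[ix jx]]];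
  case: y => [[[iy|jy]|]|[[iy|jy]|[iy jy]]] => //= *; rewrite /lmulq /pmul /=; eqsplit;
  try (by left); try (by right);
  try (match goal with E : ?c = true, E' : ?d = false, j : _ |- _ =>
   let H := fresh "H" in pose proof (@Hsub j) as H; unfold nzpath, pba in H; cbv beta iota in H; rewrite E E' in H; by move: (H isT) end).
Qed.
End Case1.


Section Case2.
Variables (j0 j1 : 'I_s).
Hypothesis Hsub : forall i, nzpath Zr (pba i j1) -> nzpath Zr (pba i j0).

Definition thq2 (x : qpath r s) : option (qpath r s * qpath r s) :=
  match x with
  | inr (inl (inr j)) => if j == j0 then Some (pe (vsnk r j0), pb r j1) else None
  | inr (inr (i, j)) => if (j == j0) && ((i, j1) \notin Zr)
                        then Some (pe (vsnk r j0), pba i j1) else None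
  | _ => None
  end.

Lemma thq2_nz x a b : thq2 x = Some (a, b) -> nzpath Zr a && nzpath Zr b.
Proof. qdes x => //=; eqsplit; case=> <- <- //=. Qed.

Lemma cond2 x y : nzpath Zr x -> nzpath Zr y -> condq thq2 x y.
Proof.
rewrite /condq; case: x => [[[ix|jx]|]|[[ix|jx]|[ix jx]]];
  case: y => [[[iy|jy]|]|[[iy|jy]|[iy jy]]] => //= *; rewrite /lmulq /pmul /=; eqsplit;
  try (by left); try (by right);
  try (match goal with E : ?c = true, E' : ?d = false, j : _ |- _ =>
   let H := fresh "H" in pose proof (@Hsub j) as H; unfold nzpath, pba in H; cbv beta iota in H; rewrite E E' in H; by move: (H isT) end).
Qed.
End Case2.

End Q.


Section Sums.
Variable V : nmodType.

Lemma sum_comp (I : finType) (g h : I -> option I) (f : I -> V) u :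
  \sum_(j | h j == Some u) \sum_(i | g i == Some j) f i = \sum_(i | obind h (g i) == Some u) f i.
Proof.
rewrite (exchange_big_dep xpredT) //= [X in _ = X]big_mkcond; apply: eq_bigr => i _.
case: (g i) => [t|] /=; last by rewrite big_pred0 // => j /=; rewrite ?andbF.
rewrite big_mkcond (bigD1 t) //= eqxx andbT big1 ?addr0 // => j /negbTE jt.
by rewrite (inj_eq (@Some_inj _)) [t == j]eq_sym jt andbF.
Qed.

Lemma sum_if (I : finType) (c : pred I) (f : I -> V) u :
  \sum_(q | (if c q then Some q else None) == Some u) f q = if c u then f u else 0.
Proof.
rewrite big_mkcond (bigD1 u) //= big1 ?addr0 => [|q /negbTE qu].
  by case: (c u); rewrite ?eqxx.
by case: (c q) => //=; rewrite (inj_eq (@Some_inj _)) qu.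
Qed.

Lemma sum_opt (I J : finType) (g : I -> option J) (F : I -> J -> V) :
  \sum_j \sum_(i | g i == Some j) F i j = \sum_i oapp (F i) 0 (g i).
Proof.
rewrite (exchange_big_dep xpredT) //=; apply: eq_bigr => i _.
case: (g i) => [t|] /=; last by rewrite big_pred0 // => j /=; rewrite ?andbF.
by rewrite (big_pred1 t) // => j /=; rewrite (inj_eq (@Some_inj _)) eq_sym.
Qed.

Lemma sum_pair (W : nmodType) (I : Type) (rr : seq I) (P : pred I) (f : I -> V) (g : I -> W) :
  \sum_(i <- rr | P i) ((f i, g i) : (V * W)%type) = (\sum_(i <- rr | P i) f i, \sum_(i <- rr | P i) g i).
Proof.
elim: rr => [|a rr IH]; first by rewrite !big_nil.
by rewrite !big_cons; case: (P a); rewrite IH.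
Qed.

End Sums.

Section Lin.
Variables (F : fieldType) (U V : lmodType F) (f : U -> V) (Hf : linear f).
Lemma lin_add x y : f (x + y) = f x + f y.
Proof. by have := Hf 1 x y; rewrite !scale1r. Qed.
Lemma lin0 : f 0 = 0.
Proof. by apply: (@addIr _ (f 0)); rewrite add0r -lin_add addr0. Qed.
Lemma lin_scale a x : f (a *: x) = a *: f x.
Proof. by have := Hf a x 0; rewrite !addr0 lin0 addr0. Qed.
Lemma lin_sum (I : Type) (rr : seq I) (P : pred I) (g : I -> U) :
  f (\sum_(i <- rr | P i) g i) = \sum_(i <- rr | P i) f (g i).
Proof. exact: (big_morph f lin_add lin0). Qed.
End Lin.

Section G.
Variables (F : fieldType) (K Vt : finType) (mul : K -> K -> option K) (e : Vt -> K)
  (hd tl : K -> Vt).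
Hypothesis mul_assoc : forall p q w,
  obind (mul p) (mul q w) = obind (fun t => mul t w) (mul p q).
Hypothesis mulLe : forall p w, mul (e w) p = if hd p == w then Some p else None.
Hypothesis mulRe : forall p w, mul p (e w) = if tl p == w then Some p else None.

Definition M1 := {ffun K -> F^o}.
Definition M2 := {ffun (K * K) -> F^o}.
Definition GL1 p (x : M1) : M1 := [ffun u => \sum_(q | mul p q == Some u) x q].
Definition GR1 p (x : M1) : M1 := [ffun u => \sum_(q | mul q p == Some u) x q].
Definition GL2 p (x : M2) : M2 := [ffun u => \sum_(q | mul p q == Some u.1) x (q, u.2)].
Definition GR2 p (x : M2) : M2 := [ffun u => \sum_(q | mul q p == Some u.2) x (u.1, q)].

Record gbimod (V : lmodType F) (L R : K -> V -> V) : Prop := GBimod {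
  g_linL : forall p, linear (L p);
  g_linR : forall p, linear (R p);
  g_assocL : forall p q v, L p (L q v) = oapp (fun u => L u v) 0 (mul p q);
  g_assocR : forall p q v, R p (R q v) = oapp (fun u => R u v) 0 (mul q p);
  g_comm : forall p q v, R q (L p v) = L p (R q v);
  g_unitL : forall v, \sum_(w : Vt) L (e w) v = v;
  g_unitR : forall v, \sum_(w : Vt) R (e w) v = v
}.

Lemma M1_bimod : gbimod GL1 GR1.
Proof.
split.
- move=> p a x y; apply/ffunP => u; rewrite !ffunE.
  under eq_bigr do rewrite !ffunE.
  by rewrite big_split /= scaler_sumr.
- move=> p a x y; apply/ffunP => u; rewrite !ffunE.
  under eq_bigr do rewrite !ffunE.
  by rewrite big_split /= scaler_sumr.
- move=> p q x; apply/ffunP => u; rewrite ffunE.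
  under eq_bigr do rewrite ffunE.
  rewrite sum_comp; under eq_bigl do rewrite mul_assoc.
  case: (mul p q) => [t|] /=; first by rewrite ffunE.
  by rewrite big_pred0 // ffunE.
- move=> p q x; apply/ffunP => u; rewrite ffunE.
  under eq_bigr do rewrite ffunE.
  rewrite sum_comp; under eq_bigl do rewrite -mul_assoc.
  case: (mul q p) => [t|] /=; first by rewrite ffunE.
  by rewrite big_pred0 // ffunE.
- move=> p q x; apply/ffunP => u; rewrite !ffunE.
  under eq_bigr do rewrite ffunE.
  under [X in _ = X]eq_bigr do rewrite ffunE.
  rewrite !sum_comp; apply: eq_bigl => i; by rewrite mul_assoc.
- move=> x; apply/ffunP => u; rewrite sum_ffunE.
  under eq_bigr => w _ do rewrite ffunE.
  under eq_bigr => w _ do under eq_bigl => q do rewrite mulLe.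
  under eq_bigr => w _ do rewrite (sum_if (fun q => hd q == w)).
  rewrite -big_mkcond (big_pred1 (hd u)) // => w /=; exact: eq_sym.
- move=> x; apply/ffunP => u; rewrite sum_ffunE.
  under eq_bigr => w _ do rewrite ffunE.
  under eq_bigr => w _ do under eq_bigl => q do rewrite mulRe.
  under eq_bigr => w _ do rewrite (sum_if (fun q => tl q == w)).
  rewrite -big_mkcond (big_pred1 (tl u)) // => w /=; exact: eq_sym.
Qed.

Lemma M2_bimod : gbimod GL2 GR2.
Proof.
split.
- move=> p a x y; apply/ffunP => u; rewrite !ffunE.
  under eq_bigr do rewrite !ffunE.
  by rewrite big_split /= scaler_sumr.
- move=> p a x y; apply/ffunP => u; rewrite !ffunE.
  under eq_bigr do rewrite !ffunE.
  by rewrite big_split /= scaler_sumr.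
- move=> p q x; apply/ffunP => -[u1 u2]; rewrite ffunE.
  under eq_bigr do rewrite ffunE /=.
  rewrite (sum_comp _ _ (fun i => x (i, u2))); under eq_bigl do rewrite mul_assoc.
  case: (mul p q) => [t|] /=; first by rewrite ffunE.
  by rewrite big_pred0 // ffunE.
- move=> p q x; apply/ffunP => -[u1 u2]; rewrite ffunE.
  under eq_bigr do rewrite ffunE /=.
  rewrite (sum_comp _ _ (fun i => x (u1, i))); under eq_bigl do rewrite -mul_assoc.
  case: (mul q p) => [t|] /=; first by rewrite ffunE.
  by rewrite big_pred0 // ffunE.
- move=> p q x; apply/ffunP => -[u1 u2]; rewrite !ffunE /=.
  under eq_bigr do rewrite ffunE /=.
  under [X in _ = X]eq_bigr do rewrite ffunE /=.
  exact: exchange_big.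
- move=> x; apply/ffunP => -[u1 u2]; rewrite sum_ffunE.
  under eq_bigr => w _ do rewrite ffunE.
  under eq_bigr => w _ do under eq_bigl => q do rewrite mulLe.
  under eq_bigr => w _ do rewrite (sum_if (fun q => hd q == w) (fun q => x (q, u2))).
  rewrite -big_mkcond (big_pred1 (hd u1)) // => w /=; exact: eq_sym.
- move=> x; apply/ffunP => -[u1 u2]; rewrite sum_ffunE.
  under eq_bigr => w _ do rewrite ffunE.
  under eq_bigr => w _ do under eq_bigl => q do rewrite mulRe.
  under eq_bigr => w _ do rewrite (sum_if (fun q => tl q == w) (fun q => x (u1, q))).
  rewrite -big_mkcond (big_pred1 (tl u2)) // => w /=; exact: eq_sym.
Qed.


Section Ext.
Variable dd : K -> M2.
Hypothesis H1 : forall p q, GL2 p (dd q) + GR2 q (dd p) = oapp dd 0 (mul p q).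
Hypothesis H0 : forall w, dd (e w) = 0.

Definition D (p : K) (l : M1) : M2 := \sum_u l u *: GR2 u (dd p).

Let LeB := M2_bimod.
Let LaB := M1_bimod.

Lemma D_lin p : linear (D p).
Proof.
move=> a x y; rewrite /D scaler_sumr -big_split /=; apply: eq_bigr => u _.
by rewrite !ffunE scalerDl scalerA.
Qed.

Lemma D_der p q l :
  GL2 p (D q l) + D p (GL1 q l) = oapp (fun t => D t l) 0 (mul p q).
Proof.
have [linL linR assL assR comm _ _] := LeB.
rewrite /D (lin_sum (linL p)).
under eq_bigr do rewrite (lin_scale (linL p)) -comm.
under [X in _ + X = _]eq_bigr do rewrite ffunE scaler_suml.
rewrite (sum_opt _ (fun i u => l i *: GR2 u (dd p))).
have E : forall i, oapp (fun u => l i *: GR2 u (dd p)) 0 (mul q i) =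
    l i *: GR2 i (GR2 q (dd p)).
  by move=> i; rewrite assR; case: (mul q i) => [t|] //=; rewrite scaler0.
rewrite (eq_bigr _ (fun i _ => E i)) -big_split /=.
under eq_bigr do rewrite -scalerDr -(lin_add (linR _)) H1.
case: (mul p q) => [t|] //=.
by rewrite big1 // => i _; rewrite (lin0 (linR i)) scaler0.
Qed.

Lemma D_comm p q l : D p (GR1 q l) = GR2 q (D p l).
Proof.
have [linL linR assL assR comm _ _] := LeB.
rewrite /D (lin_sum (linR q)).
under eq_bigr do rewrite ffunE scaler_suml.
rewrite (sum_opt _ (fun i u => l i *: GR2 u (dd p))).
apply: eq_bigr => i _; rewrite (lin_scale (linR q)) assR.
by case: (mul i q) => [t|] //=; rewrite scaler0.
Qed.

Lemma D_Le w l : D (e w) l = 0.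
Proof.
have [linL linR assL assR comm _ _] := LeB.
by rewrite /D big1 // => u _; rewrite H0 (lin0 (linR u)) scaler0.
Qed.

Definition EE := (M2 * M1)%type.
Lemma pairSD a (x1 x2 : M2) (y1 y2 : M1) :
  a *: ((x1, y1) : EE) + (x2, y2) = (a *: x1 + x2, a *: y1 + y2).
Proof. by []. Qed.
Definition LE (p : K) (x : EE) : EE := (GL2 p x.1 + D p x.2, GL1 p x.2).
Definition RE (p : K) (x : EE) : EE := (GR2 p x.1, GR1 p x.2).

Lemma E_bimod : gbimod LE RE.
Proof.
have [linL linR assL assR comm uL uR] := LeB.
have [linL' linR' assL' assR' comm' uL' uR'] := LaB.
split.
- move=> p a [m1 l1] [m2 l2]; rewrite /LE /=.
  rewrite linL' (D_lin p) linL pairSD scalerDr.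
  by rewrite addrACA.
- move=> p a [m1 l1] [m2 l2]; rewrite /RE /=.
  by rewrite linR' linR pairSD.
- move=> p q [m l]; rewrite /LE /=.
  rewrite (lin_add (linL p)) -addrA D_der assL assL'.
  by case: (mul p q) => [t|] //=; rewrite addr0.
- move=> p q [m l]; rewrite /RE /=.
  by rewrite assR assR'; case: (mul q p).
- move=> p q [m l]; rewrite /RE /LE /=.
  by rewrite (lin_add (linR q)) comm comm' D_comm.
- move=> [m l]; rewrite /LE /= sum_pair big_split /=.
  under [X in (_ + X, _)]eq_bigr do rewrite D_Le.
  by rewrite big1_eq addr0 uL uL'.
- move=> [m l]; rewrite /RE /= sum_pair.
  by rewrite uR uR'.
Qed.


Definition ghom (V W : lmodType F) (LV RV : K -> V -> V) (LW RW : K -> W -> W)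
  (f : V -> W) : Prop :=
  [/\ linear f, forall p v, f (LV p v) = LW p (f v) & forall p v, f (RV p v) = RW p (f v)].

Definition dlt (q : K) : M1 := [ffun u => (u == q)%:R].

Lemma sum_delta (P : pred K) (c : K) :
  \sum_(q | P q) ((q == c)%:R : F^o) = (P c)%:R.
Proof.
rewrite big_mkcond (bigD1 c) //= eqxx big1 ?addr0 => [|q /negbTE ->].
  by case: (P c).
by case: (P q).
Qed.

Variables (p0 x0 y0 : K).
Hypothesis Hx : forall q, mul p0 q != Some x0.
Hypothesis Hy : forall q, mul q p0 != Some y0.
Hypothesis Ht : tl y0 = tl p0.
Hypothesis Hd : dd p0 (x0, y0) = 1.

Lemma gExt : exists (E : lmodType F) (LE' RE' : K -> E -> E) (i : M2 -> E) (pi : E -> M1),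
 [/\ gbimod LE' RE', ghom GL2 GR2 LE' RE' i, ghom LE' RE' GL1 GR1 pi,
   (injective i /\ (forall y : M1, exists e, pi e = y) /\
     (forall e, pi e = 0 <-> exists x, i x = e)) &
   ~ (exists sigma : M1 -> E, ghom GL1 GR1 LE' RE' sigma /\ forall y, pi (sigma y) = y)].
Proof.
have [linL linR assL assR comm uL uR] := LeB.
have [linL' linR' assL' assR' comm' uL' uR'] := LaB.
exists (M2 * M1)%type, LE, RE, (fun x => (x, 0)), (fun x => x.2).
split.
- exact: E_bimod.
- split.
  + by move=> a x y; rewrite pairSD scaler0 addr0.
  + by move=> p x; rewrite /LE /= (lin0 (D_lin p)) (lin0 (linL' p)) addr0.
  + by move=> p x; rewrite /RE /= (lin0 (linR' p)).
- split.
  + by move=> a [x1 y1] [x2 y2].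
  + by [].
  + by [].
- split; first by move=> x y [].
  split; first by move=> y; exists (0, y).
  move=> [m l] /=; split; first by move=> ->; exists m.
  by case=> x [].
- move=> [sigma [[lin HL HR] Hs]].
  set v := tl p0; set w := hd p0.
  have C1 : GL1 p0 (dlt (e v)) = dlt p0.
    apply/ffunP => u; rewrite !ffunE.
    under eq_bigr do rewrite ffunE.
    by rewrite sum_delta mulRe eqxx (inj_eq (@Some_inj _)) eq_sym.
  have C2 : GR1 p0 (dlt (e w)) = dlt p0.
    apply/ffunP => u; rewrite !ffunE.
    under eq_bigr do rewrite ffunE.
    by rewrite sum_delta mulLe eqxx (inj_eq (@Some_inj _)) eq_sym.
  have A := HL p0 (dlt (e v)); have B := HR p0 (dlt (e w)).
  rewrite C1 in A; rewrite C2 in B.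
  have S y : sigma y = ((sigma y).1, y) by case E: (sigma y) => [a b]; rewrite -(Hs y) E.
  move: A B; rewrite [in X in _ = LE _ X]S [in X in _ = RE _ X]S /LE /RE => A B.
  have := congr1 (fun m : (M2 * M1)%type => (m.1 : M2) (x0, y0)) A; rewrite {}B /= !ffunE.
  rewrite big_pred0; last by move=> q; apply/negbTE.
  rewrite big_pred0; last by move=> q; apply/negbTE.
  rewrite add0r sum_ffunE.
  under eq_bigr do rewrite ffunE !ffunE.
  rewrite (bigD1 (e v)) //= eqxx scale1r [X in _ + X]big1 ?addr0; last first.
    by move=> u /negbTE ->; rewrite scale0r.
  under eq_bigl do rewrite mulRe.
  rewrite (sum_if (fun q => tl q == v) (fun q => dd p0 (x0, q))) Ht eqxx Hd.
  by move/eqP; rewrite eq_sym oner_eq0.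
Qed.

End Ext.

Definition dl (o : option (K * K)) : M2 := [ffun u => (o == Some u)%:R].

Lemma dl0 : dl None = 0.
Proof. by apply/ffunP => u; rewrite !ffunE. Qed.

Lemma GL2_dl p o :
  GL2 p (dl o) = dl (obind (fun xy => omap (fun t => (t, xy.2)) (mul p xy.1)) o).
Proof.
apply/ffunP => -[u1 u2]; rewrite !ffunE /=.
under eq_bigr do rewrite ffunE.
case: o => [[x y]|] /=; last by rewrite big1.
rewrite big_mkcond (bigD1 x) //= big1 ?addr0 => [|q /negbTE qx].
  rewrite (inj_eq (@Some_inj _)) xpair_eqE eqxx /=.
  case: (mul p x) => [t|] /=; last by [].
  rewrite (inj_eq (@Some_inj _)) (inj_eq (@Some_inj _)) xpair_eqE.
  by case: (t == u1).
by rewrite (inj_eq (@Some_inj _)) xpair_eqE (eq_sym x) qx; case: ifP.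
Qed.

Lemma GR2_dl p o :
  GR2 p (dl o) = dl (obind (fun xy => omap (fun t => (xy.1, t)) (mul xy.2 p)) o).
Proof.
apply/ffunP => -[u1 u2]; rewrite !ffunE /=.
under eq_bigr do rewrite ffunE.
case: o => [[x y]|] /=; last by rewrite big1.
rewrite big_mkcond (bigD1 y) //= big1 ?addr0 => [|q /negbTE qy].
  rewrite (inj_eq (@Some_inj _)) xpair_eqE eqxx /= andbT.
  case: (mul y p) => [t|] /=; last by [].
  rewrite (inj_eq (@Some_inj _)) (inj_eq (@Some_inj _)) xpair_eqE.
  by case: (t == u2); rewrite ?andbT ?andbF.
rewrite (inj_eq (@Some_inj _)) xpair_eqE (eq_sym y) qy andbF.
by case: ifP.
Qed.

Definition condK (th : K -> option (K * K)) p q :=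
  let A := obind (fun xy => omap (fun t => (t, xy.2)) (mul p xy.1)) (th q) in
  let B := obind (fun xy => omap (fun t => (xy.1, t)) (mul xy.2 q)) (th p) in
  let C := obind th (mul p q) in
  (A = None /\ B = C) \/ (B = None /\ A = C).

Lemma H1_of_cond (th : K -> option (K * K)) : (forall p q, condK th p q) ->
  forall p q, GL2 p (dl (th q)) + GR2 q (dl (th p)) = oapp (fun t => dl (th t)) 0 (mul p q).
Proof.
move=> Hc p q; rewrite GL2_dl GR2_dl.
have -> : oapp (fun t => dl (th t)) 0 (mul p q) = dl (obind th (mul p q)).
  by case: (mul p q) => //=; rewrite dl0.
by case: (Hc p q) => -[-> ->]; rewrite dl0 ?add0r ?addr0.
Qed.

End G.


Ltac eqsplit := repeat (match goal with
  | |- context [(?a == ?b)] => let E := fresh "E" in case: (a =P b) => [E|E];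
       [try (injection E; clear E; intros; subst); try subst | ] 
  | |- context [if ?c then _ else _] => let E := fresh "E" in case E: c; try congruence 
  end; rewrite //=).

Section Final.
Variables (r s : nat) (Zr : {set 'I_r * 'I_s}).
Local Notation K := (LB Zr).
Local Notation qp := (qpath r s).

Definition vv (xy : K * K) : qp * qp := (val xy.1, val xy.2).

Lemma vv_inj : injective vv.
Proof. move=> [a b] [c d] [E1 E2]; by rewrite (val_inj E1) (val_inj E2). Qed.

Lemma omap_vv_inj : injective (omap vv).
Proof.
move=> [a|] [b|] //= E.
have /= E' := congr1 (fun o => if o is Some x then x else vv a) E.
by rewrite (vv_inj E').
Qed.

Variable thq : qp -> option (qp * qp).
Hypothesis Hnz : forall x a b, thq x = Some (a, b) -> nzpath Zr a && nzpath Zr b.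
Hypothesis Hc : forall x y, nzpath Zr x -> nzpath Zr y -> condq Zr thq x y.

Definition th (p : K) : option (K * K) :=
  obind (fun xy => match insub xy.1, insub xy.2 with
                   | Some a, Some b => Some (a, b) | _, _ => None end) (thq (val p)).

Lemma th_val p : omap vv (th p) = thq (val p).
Proof.
rewrite /th; case E: (thq (val p)) => [[a b]|] //=.
have /andP[na nb] := Hnz E.
by rewrite (insubT _ na) (insubT _ nb).
Qed.

Lemma condK_th p q : condK (@lmul _ _ Zr) th p q.
Proof.
have := Hc (valP p) (valP q); rewrite /condq /condK -!th_val.
set A := obind _ (th q); set B := obind _ (th p); set C := obind th _.
set Aq := obind _ (omap vv (th q)); set Bq := obind _ (omap vv (th p)).
set Cq := obind _ (lmulq Zr _ _).
have EA : Aq = omap vv A.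
  rewrite /Aq /A; case: (th q) => [[a b]|] //=.
  by rewrite -lmul_val; case: (lmul p a).
have EB : Bq = omap vv B.
  rewrite /Bq /B; case: (th p) => [[a b]|] //=.
  by rewrite -lmul_val; case: (lmul b q).
have EC : Cq = omap vv C.
  rewrite /Cq /C -lmul_val; case: (lmul p q) => //= t; by rewrite th_val.
rewrite EA EB EC.
have N (o : option (K * K)) : omap vv o = None -> o = None by case: o.
by case=> -[/N -> /omap_vv_inj ->]; [left | right].
Qed.

End Final.

Lemma lmulLe' r s (Zr : {set 'I_r * 'I_s}) (p : LB Zr) w :
  lmul (Le Zr w) p = if (fun q : LB Zr => phead (val q)) p == w then Some p else None.
Proof. exact: lmulLe. Qed.
Lemma lmulRe' r s (Zr : {set 'I_r * 'I_s}) (p : LB Zr) w :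
  lmul p (Le Zr w) = if (fun q : LB Zr => ptail (val q)) p == w then Some p else None.
Proof. exact: lmulRe. Qed.

Lemma conv r s (Zr : {set 'I_r * 'I_s}) (F : fieldType) :
  (exists (E : lmodType F) (LE' RE' : LB Zr -> E -> E) (i : M2 F (LB Zr) -> E)
     (pi : E -> M1 F (LB Zr)),
   [/\ gbimod (@lmul _ _ Zr) (Le Zr) LE' RE',
       ghom (GL2 (@lmul _ _ Zr)) (GR2 (@lmul _ _ Zr)) LE' RE' i,
       ghom LE' RE' (GL1 (@lmul _ _ Zr)) (GR1 (@lmul _ _ Zr)) pi,
       (injective i /\ (forall y : M1 F (LB Zr), exists e, pi e = y) /\
         (forall e, pi e = 0 <-> exists x, i x = e)) &
       ~ (exists sigma : M1 F (LB Zr) -> E,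
           ghom (GL1 (@lmul _ _ Zr)) (GR1 (@lmul _ _ Zr)) LE' RE' sigma /\
           forall y, pi (sigma y) = y)]) ->
  Ext1_Lam_Lame_neq0 Zr F.
Proof.
case=> E [LE' [RE' [i [pi [Hb Hi Hp Hex Hns]]]]].
exists E, LE', RE', i, pi; split => //.
by case: Hb => *; split.
Qed.

Lemma ZsetE r s (Zr : {set 'I_r * 'I_s}) i j :
  (lmul (Lb Zr j) (La Zr i) == None) = ((i, j) \in Zr).
Proof.
case E: (lmul (Lb Zr j) (La Zr i)) => [t|]; have := lmul_val (Lb Zr j) (La Zr i);
  rewrite E /lmulq /pmul /=; by case: ((i, j) \in Zr).
Qed.

Theorem mainTheorem15 (F : fieldType) (r s : nat) (Zr : {set 'I_r * 'I_s}) :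
  ((exists i i' : 'I_r, i != i' /\ Zset_a Zr i \subset Zset_a Zr i') \/
   (exists j j' : 'I_s, j != j' /\ Zset_b Zr j \subset Zset_b Zr j')) ->
  Ext1_Lam_Lame_neq0 Zr F.
Proof.
move=> [[i [i' [Hne Hs]]] | [j [j' [Hne Hs]]]].
- have Hsub : forall j, nzpath Zr (pba i' j) -> nzpath Zr (pba i j).
    move=> j /=; apply: contra => Hij; have := subsetP Hs j; rewrite !inE !ZsetE; exact.
  pose thq := thq1 Zr i i'.
  have Hnz : forall x a b, thq x = Some (a, b) -> nzpath Zr a && nzpath Zr b :=
    @thq1_nz _ _ Zr i i'.
  have Hc : forall x y, nzpath Zr x -> nzpath Zr y -> condq Zr thq x y :=
    fun x y => @cond1 _ _ Zr i i' Hne Hsub x y.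
  have H1 := H1_of_cond F (condK_th Hnz Hc).
  have H0 : forall w, dl F (th thq (Le Zr w)) = 0 by move=> w; rewrite /th /= dl0.
  apply: conv.
  apply: (@gExt F (LB Zr) (vtx r s) (@lmul _ _ Zr) (Le Zr) (fun q => phead (val q))
    (fun q => ptail (val q)) (@lmul_assoc _ _ Zr) (@lmulLe' _ _ Zr) (@lmulRe' _ _ Zr)
    (fun p => dl F (th thq p)) H1 H0 (La Zr i) (La Zr i') (Le Zr (vsrc s i))).
  + move=> q; apply/negP => /eqP E; have := lmul_val (La Zr i) q; rewrite E /=.
    move/eqP: Hne => Hne'; case: q {E} => x nx /=; move: nx.
    case: x => [[[ix|jx]|]|[[ix|jx]|[ix jx]]] => /=; rewrite /lmulq /pmul /=; eqsplit;
      intros; simpl in *; unfold pa, pb, pba, pe, vsrc, vsnk, vz in *; try congruence.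
  + move=> q; apply/negP => /eqP E; have := lmul_val q (La Zr i); rewrite E /=.
    move/eqP: Hne => Hne'; case: q {E} => x nx /=; move: nx.
    case: x => [[[ix|jx]|]|[[ix|jx]|[ix jx]]] => /=; rewrite /lmulq /pmul /=; eqsplit;
      intros; simpl in *; unfold pa, pb, pba, pe, vsrc, vsnk, vz in *; try congruence.
  + by [].
  + have -> : th thq (La Zr i) = Some (La Zr i', Le Zr (vsrc s i)).
      by apply: omap_vv_inj; rewrite (th_val Hnz) /= eqxx.
    by rewrite /dl ffunE eqxx.
- have Hsub : forall i, nzpath Zr (pba i j') -> nzpath Zr (pba i j).
    move=> i /=; apply: contra => Hij; have := subsetP Hs i; rewrite !inE !ZsetE; exact.
  pose thq := thq2 Zr j j'.
  have Hnz : forall x a b, thq x = Some (a, b) -> nzpath Zr a && nzpath Zr b :=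
    @thq2_nz _ _ Zr j j'.
  have Hc : forall x y, nzpath Zr x -> nzpath Zr y -> condq Zr thq x y :=
    fun x y => @cond2 _ _ Zr j j' Hsub x y.
  have H1 := H1_of_cond F (condK_th Hnz Hc).
  have H0 : forall w, dl F (th thq (Le Zr w)) = 0 by move=> w; rewrite /th /= dl0.
  apply: conv.
  apply: (@gExt F (LB Zr) (vtx r s) (@lmul _ _ Zr) (Le Zr) (fun q => phead (val q))
    (fun q => ptail (val q)) (@lmul_assoc _ _ Zr) (@lmulLe' _ _ Zr) (@lmulRe' _ _ Zr)
    (fun p => dl F (th thq p)) H1 H0 (Lb Zr j) (Le Zr (vsnk r j)) (Lb Zr j')).
  + move=> q; apply/negP => /eqP E; have := lmul_val (Lb Zr j) q; rewrite E /=.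
    move/eqP: Hne => Hne'; case: q {E} => x nx /=; move: nx.
    case: x => [[[ix|jx]|]|[[ix|jx]|[ix jx]]] => /=; rewrite /lmulq /pmul /=; eqsplit;
      intros; simpl in *; unfold pa, pb, pba, pe, vsrc, vsnk, vz in *; try congruence.
  + move=> q; apply/negP => /eqP E; have := lmul_val q (Lb Zr j); rewrite E /=.
    move/eqP: Hne => Hne'; case: q {E} => x nx /=; move: nx.
    case: x => [[[ix|jx]|]|[[ix|jx]|[ix jx]]] => /=; rewrite /lmulq /pmul /=; eqsplit;
      intros; simpl in *; unfold pa, pb, pba, pe, vsrc, vsnk, vz in *; try congruence.
  + by [].
  + have -> : th thq (Lb Zr j) = Some (Le Zr (vsnk r j), Lb Zr j').
      by apply: omap_vv_inj; rewrite (th_val Hnz) /= eqxx.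
    by rewrite /dl ffunE eqxx.
Qed.
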